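(* Let $L$ be a semiprime right Leibniz algebra. Then $\mathrm{Ann}(L)=\mathrm{ran}(L)=\{0\}$.
   Context: A right Leibniz algebra satisfies $[x,[y,z]]=[[x,y],z]-[[x,z],y]$. Ideals: subspaces $I$ with $[I,L]\subseteq I$, $[L,I]\subseteq I$. $L$ is semiprime if $[I,I]\ne\{0\}$ for every nonzero ideal $I$. $\mathrm{ran}(L)=\{x\in L:[y,x]=0\ \forall y\in L\}$, $\mathrm{lan}(L)=\{x\in L:[x,y]=0\ \forall y\in L\}$, $\mathrm{Ann}(L)=\mathrm{lan}(L)\cap\mathrm{ran}(L)$. *)

(* Defs.v *)
From mathcomp Require Import all_boot all_algebra.
Set Implicit Arguments. Unset Strict Implicit. Unset Printing Implicit Defensive.
Import GRing.Theory.
Local Open Scope ring_scope.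

Definition bilinear_bracket (F : fieldType) (L : lmodType F) (br : L -> L -> L) :=
  [/\ forall a x y z, br (a *: x + y) z = a *: br x z + br y z
    & forall a x y z, br x (a *: y + z) = a *: br x y + br x z].

Definition right_leibniz_identity (F : fieldType) (L : lmodType F) (br : L -> L -> L) :=
  forall x y z, br x (br y z) = br (br x y) z - br (br x z) y.

Definition right_leibniz_algebra (F : fieldType) (L : lmodType F) (br : L -> L -> L) :=
  bilinear_bracket br /\ right_leibniz_identity br.

Definition subspace (F : fieldType) (L : lmodType F) (I : L -> Prop) :=
  [/\ I 0, forall x y, I x -> I y -> I (x + y) & forall a x, I x -> I (a *: x)].

Definition ideal (F : fieldType) (L : lmodType F) (br : L -> L -> L) (I : L -> Prop) :=
  [/\ subspace I, forall x y, I x -> I (br x y) & forall x y, I y -> I (br x y)].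

(* L is semiprime: [I,I] <> {0} for every nonzero ideal I.
   ([I,I] is the span of the products; it is nonzero iff some product is nonzero.) *)
Definition semiprime (F : fieldType) (L : lmodType F) (br : L -> L -> L) :=
  forall I : L -> Prop, ideal br I -> (exists x, I x /\ x <> 0) ->
    exists x y, I x /\ I y /\ br x y <> 0.

Definition ran (F : fieldType) (L : lmodType F) (br : L -> L -> L) (x : L) : Prop :=
  forall y, br y x = 0.
Definition lan (F : fieldType) (L : lmodType F) (br : L -> L -> L) (x : L) : Prop :=
  forall y, br x y = 0.
Definition Ann (F : fieldType) (L : lmodType F) (br : L -> L -> L) (x : L) : Prop :=
  lan br x /\ ran br x.

(* Main.v *)
Require Import Defs.
From mathcomp Require Import all_boot all_algebra.
Local Open Scope ring_scope.
Import GRing.Theory.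

Theorem proposition2p6 (F : fieldType) (L : lmodType F) (br : L -> L -> L) :
  right_leibniz_algebra br -> semiprime br ->
  (forall x : L, Ann br x <-> x = 0) /\ (forall x : L, ran br x <-> x = 0).
Proof.
move=> [[Bl Br] Lz] Sp.
have l0 : forall z, br 0 z = 0.
  move=> z; have := Bl 1 0 0 z; rewrite !scale1r addr0 => h.
  by apply: (addrI (br 0 z)); rewrite addr0 -h.
have r0 : forall z, br z 0 = 0.
  move=> z; have := Br 1 z 0 0; rewrite !scale1r addr0 => h.
  by apply: (addrI (br z 0)); rewrite addr0 -h.
have ranI : ideal br (ran br).
  split.
  - split.
    + by move=> y; exact: r0.
    + move=> x y Hx Hy z; have := Br 1 z x y; rewrite scale1r => ->.
      by rewrite Hx Hy scaler0 addr0.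
    + move=> a x Hx z; have := Br a z x 0; rewrite !addr0 => ->.
      by rewrite Hx r0 scaler0 addr0.
  - by move=> x y Hx z; rewrite Lz Hx l0 Hx subr0.
  - by move=> x y Hy z; rewrite Hy r0.
have R : forall x, ran br x <-> x = 0.
  move=> x; split; last by move=> -> z; exact: r0.
  move=> Hx; case: (eqVneq x 0) => // /eqP nx.
  have [a [b [_ [Hb nab]]]] := Sp _ ranI (ex_intro _ x (conj Hx nx)).
  by case: nab; exact: Hb.
split=> // x; split; first by move=> [_ /R].
by move=> ->; split=> z; [exact: l0 | exact: r0].
Qed.
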